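(* Let $0<\mu<L$, $q=\mu/L$, and define $A_0=0$, $A_{k+1}=\frac{(1+q)A_k+2\big(1+\sqrt{(1+A_k)(1+qA_k)}\big)}{(1-q)^2}$, $\beta_k=\frac{A_k}{(1-q)A_{k+1}}$, $\delta_k=\sqrt{\frac{A_{k+1}}{1+qA_{k+1}}}$ and $\sigma_k=\sqrt{(1+A_k)(1+qA_k)}$. Then, as $k\to\infty$: $A_k\to\infty$; $A_k/A_{k+1}\to(1-\sqrt q)^2$; $\beta_k\to\frac{1-\sqrt q}{1+\sqrt q}$; $\delta_k\to\frac1{\sqrt q}$; $\sigma_k/A_k\to\sqrt q$; and $\sigma_k/A_{k+1}\to\sqrt q(1-\sqrt q)^2$. *)

(* Defs.v *)
From Stdlib Require Import Reals.
Open Scope R_scope.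

Fixpoint A_seq (q : R) (k : nat) : R :=
  match k with
  | O => 0
  | S k' => let a := A_seq q k' in
      ((1 + q) * a + 2 * (1 + sqrt ((1 + a) * (1 + q * a)))) / (1 - q) ^ 2
  end.

Definition beta_seq (q : R) (k : nat) : R :=
  A_seq q k / ((1 - q) * A_seq q (S k)).

Definition delta_seq (q : R) (k : nat) : R :=
  sqrt (A_seq q (S k) / (1 + q * A_seq q (S k))).

Definition sigma_seq (q : R) (k : nat) : R :=
  sqrt ((1 + A_seq q k) * (1 + q * A_seq q k)).

(* Main.v *)
Require Import Defs.
From Stdlib Require Import Reals Lra.
From Coquelicot Require Import Coquelicot.
Open Scope R_scope.

Lemma A_S q k : A_seq q (S k) =
  ((1 + q) * A_seq q k + 2 * (1 + sqrt ((1 + A_seq q k) * (1 + q * A_seq q k)))) / (1 - q) ^ 2.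
Proof. reflexivity. Qed.

Lemma div_ge x d : 0 <= x -> 0 < d <= 1 -> x <= x / d.
Proof.
  intros Hx Hd. apply (Rmult_le_reg_r d); [lra|].
  field_simplify; [|lra]. nra.
Qed.

Lemma A_ge q k : 0 < q < 1 -> 0 <= A_seq q k /\ 2 * INR k <= A_seq q k.
Proof.
  intros Hq. induction k as [|k IH].
  - simpl. lra.
  - rewrite A_S, S_INR. destruct IH as [H0 H1].
    assert (Hs := sqrt_pos ((1 + A_seq q k) * (1 + q * A_seq q k))).
    assert (Hd : 0 < (1 - q) ^ 2 <= 1) by (split; nra).
    assert (Hx : 0 <= (1 + q) * A_seq q k + 2 * (1 + sqrt ((1 + A_seq q k) * (1 + q * A_seq q k)))) by nra.
    pose proof (div_ge _ _ Hx Hd). nra.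
Qed.

Theorem lemma4 (mu L : R) (Hmu : 0 < mu) (HmuL : mu < L) :
  let q := mu / L in
  cv_infty (A_seq q) /\
  Un_cv (fun k => A_seq q k / A_seq q (S k)) ((1 - sqrt q) ^ 2) /\
  Un_cv (beta_seq q) ((1 - sqrt q) / (1 + sqrt q)) /\
  Un_cv (delta_seq q) (1 / sqrt q) /\
  Un_cv (fun k => sigma_seq q k / A_seq q k) (sqrt q) /\
  Un_cv (fun k => sigma_seq q k / A_seq q (S k)) (sqrt q * (1 - sqrt q) ^ 2).
Proof.
  intros q.
  assert (Hq : 0 < q < 1).
  { unfold q; split. apply Rdiv_lt_0_compat; lra.
    apply (Rmult_lt_reg_r L); [lra|]. field_simplify; lra. }
  set (t := sqrt q).
  assert (Ht : 0 < t) by (apply sqrt_lt_R0; lra).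
  assert (Htq : q = t * t) by (unfold t; rewrite sqrt_sqrt; lra).
  assert (Ht1 : t < 1) by nra.
  set (A := A_seq q).
  assert (Apos : forall n, 0 < A (S n)).
  { intros n. destruct (A_ge q (S n) Hq) as [_ H]. rewrite S_INR in H.
    pose proof (pos_INR n). unfold A. lra. }
  assert (Hinf : is_lim_seq A p_infty).
  { apply is_lim_seq_le_p_loc with (u := INR); [|exact is_lim_seq_INR].
    exists 0%nat. intros n _. destruct (A_ge q n Hq) as [_ H].
    pose proof (pos_INR n). unfold A. lra. }
  set (r := fun n => / A (S n)).
  assert (Hr : is_lim_seq r 0).
  { unfold r. apply is_lim_seq_incr_1 in Hinf.
    pose proof (is_lim_seq_inv _ _ Hinf) as H. simpl in H. apply H. discriminate. }
  set (s := fun n => sqrt ((r n + 1) * (r n + q))).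
  assert (Hs : is_lim_seq s t).
  { unfold s. replace t with (sqrt ((0 + 1) * (0 + q))).
    2:{ unfold t. f_equal. ring. }
    apply is_lim_seq_continuous.
    - apply continuity_pt_sqrt. nra.
    - apply is_lim_seq_mult'; apply is_lim_seq_plus'; auto; apply is_lim_seq_const. }
  assert (Hsig : forall n, sigma_seq q (S n) = s n * A (S n)).
  { intros n. unfold sigma_seq, s, r. fold A. pose proof (Apos n) as Ha.
    replace ((1 + A (S n)) * (1 + q * A (S n))) with
      (((/ A (S n) + 1) * (/ A (S n) + q)) * (A (S n) * A (S n))) by (field; lra).
    rewrite sqrt_mult_alt. rewrite sqrt_square; lra.
    pose proof (Rinv_0_lt_compat _ Ha). nra. }
  set (Rt := fun n => A (S (S n)) / A (S n)).
  assert (HRt : is_lim_seq Rt (1 / (1 - t) ^ 2)).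
  { apply is_lim_seq_ext with (u := fun n => ((1 + q) + 2 * r n + 2 * s n) / (1 - q) ^ 2).
    - intros n. unfold Rt, A. rewrite (A_S q (S n)). fold A.
      unfold sigma_seq in Hsig. rewrite Hsig. unfold r. pose proof (Apos n).
      field. split; lra.
    - replace (1 / (1 - t) ^ 2) with (((1 + q) + 2 * 0 + 2 * t) / (1 - q) ^ 2).
      2:{ rewrite Htq. field. split; nra. }
      apply is_lim_seq_div'.
      + apply is_lim_seq_plus'; [apply is_lim_seq_plus'|];
          [apply is_lim_seq_const| |]; apply is_lim_seq_mult'; auto; apply is_lim_seq_const.
      + apply is_lim_seq_const.
      + nra. }
  assert (Hrat : is_lim_seq (fun n => A (S n) / A (S (S n))) ((1 - t) ^ 2)).
  { apply is_lim_seq_ext with (u := fun n => 1 / Rt n).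
    - intros n. unfold Rt. pose proof (Apos n). pose proof (Apos (S n)). field. lra.
    - replace ((1 - t) ^ 2) with (1 / (1 / (1 - t) ^ 2)) by (field; lra).
      apply is_lim_seq_div'; [apply is_lim_seq_const|exact HRt|].
      apply Rgt_not_eq. apply Rlt_gt. apply Rdiv_lt_0_compat; nra. }
  split; [apply is_lim_seq_p_infty_Reals; exact Hinf|].
  split; [apply is_lim_seq_Reals, is_lim_seq_incr_1; exact Hrat|].
  split.
  { apply is_lim_seq_Reals, is_lim_seq_incr_1.
    apply is_lim_seq_ext with (u := fun n => (A (S n) / A (S (S n))) / (1 - q)).
    - intros n. unfold beta_seq. fold A. pose proof (Apos (S n)). field. lra.
    - replace ((1 - t) / (1 + t)) with ((1 - t) ^ 2 / (1 - q)).
      2:{ rewrite Htq. field. nra. }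
      apply is_lim_seq_div'; [exact Hrat|apply is_lim_seq_const|lra]. }
  split.
  { apply is_lim_seq_Reals, is_lim_seq_incr_1.
    apply is_lim_seq_ext with (u := fun n => sqrt (1 / (r (S n) + q))).
    - intros n. unfold delta_seq, r. fold A. pose proof (Apos (S n)) as Ha. f_equal. field.
      split; nra.
    - replace (1 / t) with (sqrt (1 / (0 + q))).
      2:{ rewrite Htq. replace (1 / (0 + t * t)) with ((1/t) * (1/t)) by (field; lra).
          apply sqrt_square. apply Rlt_le, Rdiv_lt_0_compat; lra. }
      apply is_lim_seq_continuous.
      + apply continuity_pt_sqrt. apply Rlt_le, Rdiv_lt_0_compat; lra.
      + apply is_lim_seq_div'; [apply is_lim_seq_const| |lra].
        apply is_lim_seq_plus'; [|apply is_lim_seq_const].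
        apply (is_lim_seq_incr_1 r 0). exact Hr. }
  split.
  { apply is_lim_seq_Reals, is_lim_seq_incr_1.
    apply is_lim_seq_ext with (u := s); [|exact Hs].
    intros n. fold A. rewrite Hsig. pose proof (Apos n). field. lra. }
  { apply is_lim_seq_Reals, is_lim_seq_incr_1.
    apply is_lim_seq_ext with (u := fun n => s n * (A (S n) / A (S (S n)))).
    - intros n. fold A. rewrite Hsig. pose proof (Apos n). pose proof (Apos (S n)).
      field. lra.
    - apply is_lim_seq_mult'; assumption. }
Qed.
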